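(* For every $\epsilon>0$, the operator $$\hat H(\epsilon):=-\partial_t^2+\frac{t^2}{2(1+\epsilon t^2)^{1/2}}-\frac{1}{\sqrt2\,(1+\epsilon t^2)^{1/4}}$$ on $L^2(\mathbb{R},dt)$ satisfies $\hat H(\epsilon)\ge-\frac{\epsilon}{4}$. Consequently, for every $u>0$ the operator $H_u:=-\partial_v^2+\frac{v^2}{2(u^2+v^2)^{1/2}}-\frac{1}{\sqrt2(u^2+v^2)^{1/4}}$ on $L^2(\mathbb{R},dv)$ satisfies $H_u\ge-\frac{1}{4u^2}$.
   Context: $\hat H(\epsilon)$ and $H_u$ are the self-adjoint operators defined by the closures of their quadratic forms on $C_0^\infty(\mathbb{R})$; inequalities are in the sense of quadratic forms. (Under $v=u^{1/4}t$ one has $H_u=u^{-1/2}\hat H(u^{-3/2})$.) *)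

(* Defs.v *)
From Stdlib Require Export Reals.
Open Scope R_scope.

Definition smooth (f : R -> R) : Prop :=
  exists fs : nat -> R -> R,
    fs 0%nat = f /\ forall (n : nat) (x : R), derivable_pt_lim (fs n) x (fs (S n) x).

Definition supported_in (f : R -> R) (a : R) : Prop :=
  forall x, a < Rabs x -> f x = 0.

Definition test_fun (f : R -> R) : Prop :=
  smooth f /\ exists a, supported_in f a.

Definition Vhat (eps t : R) : R :=
  t ^ 2 / (2 * sqrt (1 + eps * t ^ 2))
  - 1 / (sqrt 2 * sqrt (sqrt (1 + eps * t ^ 2))).

Definition Vu (u v : R) : R :=
  v ^ 2 / (2 * sqrt (u ^ 2 + v ^ 2))
  - 1 / (sqrt 2 * sqrt (sqrt (u ^ 2 + v ^ 2))).

(** Quadratic-form lower bound  -d^2 + V >= c  on C_0^infinity(R):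
    for every test function f with derivative f', supported in [-a,a],
    int_{-a}^{a} (f'^2 + V f^2) >= c * int_{-a}^{a} f^2. *)
Definition form_lower_bound (V : R -> R) (c : R) : Prop :=
  forall (f f' : R -> R), test_fun f ->
  (forall x, derivable_pt_lim f x (f' x)) ->
  forall (a : R), 0 < a -> supported_in f a ->
  forall (pr1 : Riemann_integrable (fun t => f' t ^ 2 + V t * f t ^ 2) (- a) a)
         (pr2 : Riemann_integrable (fun t => f t ^ 2) (- a) a),
  RiemannInt pr1 >= c * RiemannInt pr2.

(* Main.v *)
Require Import Defs.
From Stdlib Require Import Reals Lra Psatz FunctionalExtensionality.
Open Scope R_scope.


Lemma cont_zero_right (f : R -> R) (x : R) :
  continuity_pt f x ->
  (forall d, 0 < d -> exists y, Rabs (y - x) < d /\ y <> x /\ f y = 0) -> f x = 0.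
Proof.
  intros Hc Hz.
  destruct (Req_dec (f x) 0) as [|Hne]; [assumption|].
  exfalso.
  unfold continuity_pt, continue_in, limit1_in, limit_in in Hc; simpl in Hc.
  destruct (Hc (Rabs (f x)) (Rabs_pos_lt _ Hne)) as [alp [Halp H]].
  destruct (Hz alp Halp) as [y [Hy1 [Hy2 Hy3]]].
  assert (H' := H y).
  unfold dist in H'; simpl in H'; unfold Rdist in H'.
  rewrite Hy3 in H'.
  assert (Rabs (0 - f x) < Rabs (f x)) by (apply H'; split; [split; [exact I| auto] | exact Hy1]).
  rewrite Rminus_0_l, Rabs_Ropp in H0. lra.
Qed.

Lemma ground_state (V W W' : R -> R) (c : R) :
  (forall x, derivable_pt_lim W x (W' x)) ->
  (forall x, continuity_pt W' x) ->
  (forall x, c <= V x - W x ^ 2 - W' x) ->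
  form_lower_bound V c.
Proof.
  intros HW HW' Hc f f' [[fs [Hf0 Hfs]] _] Hf' a Ha Hsupp pr1 pr2.
  assert (Hf1 : f' = fs 1%nat).
  { apply functional_extensionality; intro x.
    apply (uniqueness_limite f x); [apply Hf' | rewrite <- Hf0; apply Hfs]. }
  assert (Cf' : forall x, continuity_pt f' x).
  { intro x; rewrite Hf1; apply derivable_continuous_pt; exact (exist _ _ (Hfs 1%nat x)). }
  assert (Cf : forall x, continuity_pt f x).
  { intro x; apply derivable_continuous_pt; exact (exist _ _ (Hf' x)). }
  assert (CW : forall x, continuity_pt W x).
  { intro x; apply derivable_continuous_pt; exact (exist _ _ (HW x)). }
  set (Phi := fun x => W x * (f x * f x)).
  set (Phi' := fun x => W' x * (f x * f x) + W x * (f' x * f x + f x * f' x)).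
  assert (HPhi : forall x, derivable_pt_lim Phi x (Phi' x)).
  { intro x. unfold Phi, Phi'.
    apply (derivable_pt_lim_mult W (fun x => f x * f x)); [apply HW|].
    apply (derivable_pt_lim_mult f f); apply Hf'. }
  assert (CPhi' : forall x, continuity_pt Phi' x).
  { intro x; unfold Phi'.
    apply continuity_pt_plus; apply continuity_pt_mult; auto;
      try (apply continuity_pt_plus); apply continuity_pt_mult; auto. }
  set (C := @mkC1 Phi (fun x => exist _ (Phi' x) (HPhi x)) CPhi').
  assert (prP : Riemann_integrable (derive C (diff0 C)) (- a) a).
  { apply continuity_implies_RiemannInt; [lra|]. intros; apply CPhi'. }
  assert (HFTC := @FTC_Riemann C (- a) a prP).
  assert (Hfa : f a = 0).
  { apply cont_zero_right; [apply Cf|]. intros d Hd.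
    exists (a + d / 2). repeat split.
    - replace (a + d/2 - a) with (d/2) by ring. rewrite Rabs_pos_eq; lra.
    - lra.
    - apply Hsupp. rewrite Rabs_pos_eq; lra. }
  assert (Hfma : f (- a) = 0).
  { apply cont_zero_right; [apply Cf|]. intros d Hd.
    exists (- a - d / 2). repeat split.
    - replace (- a - d/2 - - a) with (- (d/2)) by ring. rewrite Rabs_Ropp, Rabs_pos_eq; lra.
    - lra.
    - apply Hsupp. rewrite Rabs_left; lra. }
  change (C a) with (W a * (f a * f a)) in HFTC. change (C (- a)) with (W (- a) * (f (- a) * f (- a))) in HFTC. rewrite Hfa, Hfma in HFTC.
  set (pr3 := RiemannInt_P10 c prP pr2).
  assert (H13 := RiemannInt_P13 prP pr2 pr3).
  assert (H19 : RiemannInt pr3 <= RiemannInt pr1).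
  { apply RiemannInt_P19; [lra|]. intros x _. simpl. unfold Phi'.
    assert (Hx := Hc x).
    assert (0 <= (V x - W x ^ 2 - W' x - c) * (f x ^ 2)) by (apply Rmult_le_pos; nra).
    unfold derive, derive_pt; simpl.
    assert (0 <= (f' x - W x * f x) ^ 2) by apply pow2_ge_0.
    match goal with |- ?L <= ?Rr =>
      assert (E : Rr - L = (f' x - W x * f x) ^ 2 + (V x - W x ^ 2 - W' x - c) * f x ^ 2) by ring end.
    lra. }
  rewrite !Rmult_0_r, Rminus_0_r in HFTC. rewrite HFTC, Rplus_0_l in H13. rewrite <- H13. apply Rle_ge; exact H19.
Qed.

Lemma D_eq f x l l' : derivable_pt_lim f x l -> l = l' -> derivable_pt_lim f x l'.
Proof. intros H ->; exact H. Qed.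
Lemma D_plus f g x l1 l2 : derivable_pt_lim f x l1 -> derivable_pt_lim g x l2 ->
  derivable_pt_lim (fun y => f y + g y) x (l1 + l2).
Proof. intros; apply (derivable_pt_lim_plus f g); auto. Qed.
Lemma D_minus f g x l1 l2 : derivable_pt_lim f x l1 -> derivable_pt_lim g x l2 ->
  derivable_pt_lim (fun y => f y - g y) x (l1 - l2).
Proof. intros; apply (derivable_pt_lim_minus f g); auto. Qed.
Lemma D_mult f g x l1 l2 : derivable_pt_lim f x l1 -> derivable_pt_lim g x l2 ->
  derivable_pt_lim (fun y => f y * g y) x (l1 * g x + f x * l2).
Proof. intros; apply (derivable_pt_lim_mult f g); auto. Qed.
Lemma D_div f g x l1 l2 : derivable_pt_lim f x l1 -> derivable_pt_lim g x l2 -> g x <> 0 ->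
  derivable_pt_lim (fun y => f y / g y) x ((l1 * g x - l2 * f x) / (g x) ^ 2).
Proof. intros. eapply D_eq. apply (derivable_pt_lim_div f g x l1 l2); auto. unfold Rsqr; f_equal; ring. Qed.
Lemma D_const c x : derivable_pt_lim (fun _ => c) x 0.
Proof. apply derivable_pt_lim_const. Qed.
Lemma D_id x : derivable_pt_lim (fun y => y) x 1.
Proof. apply derivable_pt_lim_id. Qed.
Lemma D_sq x : derivable_pt_lim (fun y => y ^ 2) x (2 * x).
Proof. eapply D_eq. apply (derivable_pt_lim_pow x 2). simpl; ring. Qed.
Lemma D_sqrt f x l : derivable_pt_lim f x l -> 0 < f x ->
  derivable_pt_lim (fun y => sqrt (f y)) x (l / (2 * sqrt (f x))).
Proof.
  intros H Hp. eapply D_eq.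
  apply (derivable_pt_lim_comp f sqrt x l _ H (derivable_pt_lim_sqrt _ Hp)).
  unfold Rdiv; ring.
Qed.

Lemma C_plus f g x : continuity_pt f x -> continuity_pt g x -> continuity_pt (fun y => f y + g y) x.
Proof. intros; apply (continuity_pt_plus f g); auto. Qed.
Lemma C_minus f g x : continuity_pt f x -> continuity_pt g x -> continuity_pt (fun y => f y - g y) x.
Proof. intros; apply (continuity_pt_minus f g); auto. Qed.
Lemma C_mult f g x : continuity_pt f x -> continuity_pt g x -> continuity_pt (fun y => f y * g y) x.
Proof. intros; apply (continuity_pt_mult f g); auto. Qed.
Lemma C_div f g x : continuity_pt f x -> continuity_pt g x -> g x <> 0 -> continuity_pt (fun y => f y / g y) x.
Proof. intros; apply (continuity_pt_div f g); auto. Qed.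
Lemma C_const c x : continuity_pt (fun _ => c) x.
Proof. apply continuity_pt_const; intros ? ?; reflexivity. Qed.
Lemma C_id x : continuity_pt (fun y => y) x.
Proof. apply derivable_continuous_pt; exact (exist _ _ (D_id x)). Qed.
Lemma C_pow f n x : continuity_pt f x -> continuity_pt (fun y => f y ^ n) x.
Proof.
  intro H; induction n as [|n IH]; simpl.
  - apply C_const.
  - apply (C_mult f (fun y => f y ^ n)); auto.
Qed.
Lemma C_sqrt f x : continuity_pt f x -> 0 <= f x -> continuity_pt (fun y => sqrt (f y)) x.
Proof.
  intros H Hp. apply (continuity_pt_comp f sqrt); auto. apply continuity_pt_sqrt; auto.
Qed.

Section Gen.
Variables (a b : R).
Hypothesis (Ha : 0 < a) (Hb : 0 < b).

Lemma rho_pos t : 0 < a + b * t ^ 2.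
Proof. nra. Qed.
Lemma s1_pos t : 0 < sqrt (a + b * t ^ 2).
Proof. apply sqrt_lt_R0, rho_pos. Qed.
Lemma s2_pos t : 0 < sqrt (sqrt (a + b * t ^ 2)).
Proof. apply sqrt_lt_R0, s1_pos. Qed.
Lemma K_pos : 0 < sqrt 2.
Proof. apply sqrt_lt_R0; lra. Qed.

Definition Vg t := t ^ 2 / (2 * sqrt (a + b * t ^ 2))
  - 1 / (sqrt 2 * sqrt (sqrt (a + b * t ^ 2))).
Definition Wg t := b * t / (4 * (a + b * t ^ 2)) - t / (sqrt 2 * sqrt (sqrt (a + b * t ^ 2))).
Definition Wg' t :=
  ((b * 1) * (4 * (a + b * t ^ 2)) - 4 * (b * (2 * t)) * (b * t)) / (4 * (a + b * t ^ 2)) ^ 2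
  - (1 * (sqrt 2 * sqrt (sqrt (a + b * t ^ 2)))
     - sqrt 2 * ((b * (2 * t)) / (2 * sqrt (a + b * t ^ 2)) / (2 * sqrt (sqrt (a + b * t ^ 2)))) * t)
    / (sqrt 2 * sqrt (sqrt (a + b * t ^ 2))) ^ 2.

Lemma Wg_deriv t : derivable_pt_lim Wg t (Wg' t).
Proof.
  assert (H1:=rho_pos t); assert (H2:=s1_pos t); assert (H3:=s2_pos t); assert (H4:=K_pos).
  unfold Wg, Wg'. eapply D_eq.
  - apply D_minus.
    + apply D_div.
      * apply D_mult; [apply D_const | apply D_id].
      * apply D_mult; [apply D_const|]. apply D_plus; [apply D_const|].
        apply D_mult; [apply D_const | apply D_sq].
      * lra.
    + apply D_div.
      * apply D_id.
      * apply D_mult; [apply D_const|]. apply D_sqrt; [apply D_sqrt|].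
        -- apply D_plus; [apply D_const|]. apply D_mult; [apply D_const | apply D_sq].
        -- apply rho_pos.
        -- apply s1_pos.
      * nra.
  - cbv beta. field. repeat split; lra.
Qed.
Lemma Wg'_cont t : continuity_pt Wg' t.
Proof.
  assert (H1:=rho_pos t); assert (H2:=s1_pos t); assert (H3:=s2_pos t); assert (H4:=K_pos).
  unfold Wg'.
  repeat first [ apply C_minus | apply C_plus | apply C_div | apply C_mult | apply C_pow
               | apply C_sqrt | apply C_id | apply C_const ];
  cbv beta; try apply pow_nonzero; try nra.
Qed.
Lemma res_bound t : - (b / (4 * a)) <= Vg t - Wg t ^ 2 - Wg' t.
Proof.
  assert (H1:=rho_pos t); assert (H2:=s1_pos t); assert (H3:=s2_pos t); assert (H4:=K_pos).
  assert (HK : sqrt 2 * sqrt 2 = 2) by (apply sqrt_sqrt; lra).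
  assert (HQ : sqrt (sqrt (a + b * t ^ 2)) * sqrt (sqrt (a + b * t ^ 2)) = sqrt (a + b * t ^ 2))
    by (apply sqrt_sqrt; lra).
  assert (HR : sqrt (a + b * t ^ 2) * sqrt (a + b * t ^ 2) = a + b * t ^ 2)
    by (apply sqrt_sqrt; lra).
  unfold Vg, Wg, Wg'.
  set (Q := sqrt (sqrt (a + b * t ^ 2))) in *.
  set (R1 := sqrt (a + b * t ^ 2)) in *.
  set (K := sqrt 2) in *.
  clearbody Q R1 K.
  rewrite <- HR. rewrite <- HQ.
  rewrite <- HQ in H2, HR.
  assert (E : forall e, e = 2 -> t ^ 2 / (2 * (Q * Q)) - 1 / (K * Q) -
    (b * t / (4 * (Q * Q * (Q * Q))) - t / (K * Q)) ^ 2 -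
    ((b * 1 * (4 * (Q * Q * (Q * Q))) - 4 * (b * (2 * t)) * (b * t)) / (4 * (Q * Q * (Q * Q))) ^ 2 -
     (1 * (K * Q) - K * (b * (2 * t) / (2 * (Q * Q)) / (2 * Q)) * t) / (K * Q) ^ 2)
    = - b / (4 * (Q * Q * (Q * Q))) + 7 * b ^ 2 * t ^ 2 / (16 * (Q * Q * (Q * Q)) ^ 2)
      + (t ^ 2 / (2 * (Q * Q)) - t ^ 2 / (K * K * (Q * Q)))).
  { intros. field. lra. }
  rewrite (E 2 eq_refl). rewrite HK.
  set (P := Q * Q * (Q * Q)) in *. clearbody P. subst P.
  assert (F : - b / (4 * (a + b * t ^ 2)) + 7 * b ^ 2 * t ^ 2 / (16 * (a + b * t ^ 2) ^ 2)
     + (t ^ 2 / (2 * (Q * Q)) - t ^ 2 / (2 * (Q * Q))) - - (b / (4 * a))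
     = b * (b * t ^ 2) * (4 * (a + b * t ^ 2) + 7 * a) / (16 * a * (a + b * t ^ 2) ^ 2)).
  { field. repeat split; nra. }
  assert (0 <= b * (b * t ^ 2) * (4 * (a + b * t ^ 2) + 7 * a) / (16 * a * (a + b * t ^ 2) ^ 2)).
  { unfold Rdiv. apply Rmult_le_pos.
    - apply Rmult_le_pos; [|nra]. apply Rmult_le_pos; nra.
    - apply Rlt_le, Rinv_0_lt_compat. apply Rmult_lt_0_compat; [lra | apply pow_lt; lra]. }
  lra.
Qed.
End Gen.

Theorem proposition1 :
  (forall eps : R, 0 < eps -> form_lower_bound (Vhat eps) (- (eps / 4))) /\
  (forall u : R, 0 < u -> form_lower_bound (Vu u) (- (1 / (4 * u ^ 2)))).
Proof.
  split.
  - intros eps He.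
    replace (- (eps / 4)) with (- (eps / (4 * 1))) by (f_equal; field).
    assert (Hv : Vhat eps = Vg 1 eps) by reflexivity.
    rewrite Hv.
    apply (ground_state _ (Wg 1 eps) (Wg' 1 eps)).
    + intro x; apply Wg_deriv; lra.
    + intro x; apply Wg'_cont; lra.
    + intro x; apply res_bound; lra.
  - intros u Hu.
    assert (Hv : Vu u = Vg (u ^ 2) 1).
    { apply functional_extensionality; intro v. unfold Vu, Vg. rewrite Rmult_1_l. reflexivity. }
    rewrite Hv.
    assert (Hu2 : 0 < u ^ 2) by (apply pow_lt; lra).
    apply (ground_state _ (Wg (u ^ 2) 1) (Wg' (u ^ 2) 1)).
    + intro x; apply Wg_deriv; lra.
    + intro x; apply Wg'_cont; lra.
    + intro x; apply res_bound; lra.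
Qed.
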